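(* Let $\Gamma:[0,1]\to\mathcal{D}$ be a continuous path. For any $s\in[0,1]$ and any finitely generated subgroup $H\le\Gamma_s$, the restriction $J_{s,t}|_H$ is an injective homomorphism into $\mathrm{PSL}_2\mathbb{C}$ for all $t\in[0,1]$ sufficiently close to $s$.
   Context: $\mathcal{D}$: discrete torsion-free subgroups of $\mathrm{PSL}_2\mathbb{C}$ with the Chabauty topology ($\Gamma_n\to\Gamma$ iff accumulation points of sequences $\psi_n\in\Gamma_n$ lie in $\Gamma$ and each element of $\Gamma$ is a limit of some $\psi_n\in\Gamma_n$). For a path $\Gamma$ with $\Gamma_t=\Gamma(t)$, $s\in[0,1]$, $\psi\in\Gamma_s$: a $\Gamma$-path through $\psi$ based at $s$ is a continuous $j:I\to\mathrm{PSL}_2\mathbb{C}$, $I\subseteq[0,1]$ an interval containing $s$, with $j(t)\in\Gamma_t$ for $t\in I$ and $j(s)=\psi$. Any two such paths agree on the intersection of their domains, so there is a maximal such interval $I^s_\psi$, carrying the path $j^s_\psi$. With $\overline{\mathrm{PSL}_2\mathbb{C}}=\mathrm{PSL}_2\mathbb{C}\cup\{\infty\}$, define $J_{s,t}:\Gamma_s\to\overline{\mathrm{PSL}_2\mathbb{C}}$ by $J_{s,t}(\psi)=j^s_\psi(t)$ if $t\in I^s_\psi$ and $\infty$ otherwise. *)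

(* Defs.v *)
From HB Require Import structures.
From mathcomp Require Import all_boot all_order all_algebra.
From mathcomp Require Import complex reals.
From Stdlib Require Import ClassicalEpsilon.
Set Implicit Arguments. Unset Strict Implicit. Unset Printing Implicit Defensive.
Import Order.TTheory GRing.Theory Num.Theory.
Local Open Scope ring_scope.

Section PSL2.
Variable R : realType.

Definition Mat := 'M[R[i]]_2.

Definition cabs (z : R[i]) : R := Normc.normc z.

Definition mnorm (A : Mat) : R := \sum_(i < 2) \sum_(j < 2) cabs (A i j).

(* "positive" half of C \ {0}: a section of z |-> -z *)
Definition pos_c (z : R[i]) : bool :=
  (0 < complex.Re z) || ((complex.Re z == 0) && (0 < complex.Im z)).

Definition lead_entry (A : Mat) : R[i] :=
  if A 0 0 != 0 then A 0 0 else if A 0 1 != 0 then A 0 1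
  else if A 1 0 != 0 then A 1 0 else A 1 1.

Definition normalized (A : Mat) : bool := pos_c (lead_entry A).

(* canonical representative of the class {A, -A} *)
Definition normalize (A : Mat) : Mat := if normalized A then A else - A.

Lemma lead_entryN (A : Mat) : lead_entry (- A) = - lead_entry A.
Proof.
rewrite /lead_entry !mxE !oppr_eq0.
by case: (A 0 0 != 0); case: (A 0 1 != 0); case: (A 1 0 != 0).
Qed.

Lemma lead_entry_eq0 (A : Mat) : lead_entry A = 0 -> A = 0.
Proof.
rewrite /lead_entry.
case: ifP => [/negP + H|/negbFE/eqP a0]; first by rewrite H eqxx.
case: ifP => [/negP + H|/negbFE/eqP b0]; first by rewrite H eqxx.
case: ifP => [/negP + H|/negbFE/eqP c0 d0]; first by rewrite H eqxx.
have E : forall k : 'I_2, k = 0 \/ k = 1.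
  by case=> [[|[|//]] ?]; [left|right]; apply/val_inj.
apply/matrixP => i j; rewrite mxE.
by case: (E i) => ->; case: (E j) => ->.
Qed.

Lemma pos_cN (z : R[i]) : z != 0 -> ~~ pos_c z -> pos_c (- z).
Proof.
case: z => a b; rewrite /pos_c /= => nz.
rewrite negb_or negb_and -!leNgt => /andP[ha hb].
rewrite oppr_gt0 oppr_eq0.
have [a0|a0] := eqVneq a 0; last by rewrite lt_neqAle a0 ha.
rewrite a0 eqxx ltxx /= in hb *.
rewrite oppr_gt0 lt_neqAle hb andbT; apply/eqP => b0.
by move: nz; rewrite a0 b0 eqxx.
Qed.

Lemma normalized_normalize (A : Mat) : A != 0 -> normalized (normalize A).
Proof.
move=> nzA; rewrite /normalize; case: ifP => // /negbT h.
rewrite /normalized lead_entryN; apply: pos_cN => //.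
by apply/eqP => /lead_entry_eq0 /eqP; rewrite (negbTE nzA).
Qed.

Lemma det_normalize (A : Mat) : \det (normalize A) = \det A.
Proof.
rewrite /normalize; case: ifP => // _.
by rewrite -scaleN1r detZ expr2 mulrNN !mul1r.
Qed.

Lemma det1_neq0 (A : Mat) : \det A = 1 -> A != 0.
Proof. by move=> h; apply/eqP => A0; move: h; rewrite A0 det0 => /eqP; rewrite eq_sym oner_eq0. Qed.

Definition is_psl (A : Mat) : bool := (\det A == 1) && normalized A.

(* PSL_2(C) = SL_2(C)/{+-I}, each class represented by its normalized member *)
Record PSL2 := MkPSL2 { pmat : Mat; pmatP : is_psl pmat }.

Lemma is_psl_normalize (A : Mat) : \det A = 1 -> is_psl (normalize A).
Proof.
move=> h; rewrite /is_psl det_normalize h eqxx /=.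
by apply: normalized_normalize; apply: det1_neq0.
Qed.

Lemma det_mul1 (p q : PSL2) : \det (pmat p *m pmat q) = 1.
Proof.
case: p q => [A /andP[/eqP hA _]] [B /andP[/eqP hB _]] /=.
by rewrite det_mulmx hA hB mulr1.
Qed.

Definition pmul (p q : PSL2) : PSL2 :=
  MkPSL2 (is_psl_normalize (det_mul1 p q)).

Lemma det_inv1 (p : PSL2) : \det (invmx (pmat p)) = 1.
Proof.
case: p => [A /andP[/eqP hA _]] /=.
by rewrite det_inv hA invr1.
Qed.

Definition pinv (p : PSL2) : PSL2 := MkPSL2 (is_psl_normalize (det_inv1 p)).

Lemma det_one : \det (1%:M : Mat) = 1.
Proof. by rewrite det1. Qed.

Definition pone : PSL2 := MkPSL2 (is_psl_normalize det_one).

Definition ppow (p : PSL2) (n : nat) : PSL2 := iter n (pmul p) pone.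

Definition pdist (p q : PSL2) : R :=
  Num.min (mnorm (pmat p - pmat q)) (mnorm (pmat p + pmat q)).

Definition psubgroup (G : PSL2 -> Prop) : Prop :=
  G pone /\ (forall g h, G g -> G h -> G (pmul g h)) /\ (forall g, G g -> G (pinv g)).

Definition pdiscrete (G : PSL2 -> Prop) : Prop :=
  forall g, G g -> exists2 e : R, 0 < e & forall h, G h -> pdist h g < e -> h = g.

Definition ptorsion_free (G : PSL2 -> Prop) : Prop :=
  forall g n, G g -> (0 < n)%N -> ppow g n = pone -> g = pone.

Definition inD (G : PSL2 -> Prop) : Prop :=
  psubgroup G /\ pdiscrete G /\ ptorsion_free G.

Definition generated (S : PSL2 -> Prop) (g : PSL2) : Prop :=
  forall K, psubgroup K -> (forall x, S x -> K x) -> K g.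

Definition fin_gen_subgroup (H : PSL2 -> Prop) : Prop :=
  psubgroup H /\ exists l : list PSL2, forall g, H g <-> generated (fun x => List.In x l) g.

Definition pconv (psi : nat -> PSL2) (g : PSL2) : Prop :=
  forall e : R, 0 < e -> exists N, forall n, (N <= n)%N -> pdist (psi n) g < e.

Definition paccum (psi : nat -> PSL2) (g : PSL2) : Prop :=
  forall e : R, 0 < e -> forall N, exists2 n, (N <= n)%N & pdist (psi n) g < e.

Definition chabauty_conv (Gs : nat -> PSL2 -> Prop) (G : PSL2 -> Prop) : Prop :=
  (forall (psi : nat -> PSL2) g, (forall n, Gs n (psi n)) -> paccum psi g -> G g) /\
  (forall g, G g -> exists psi : nat -> PSL2, (forall n, Gs n (psi n)) /\ pconv psi g).

Definition rconv (u : nat -> R) (t : R) : Prop :=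
  forall e : R, 0 < e -> exists N, forall n, (N <= n)%N -> `|u n - t| < e.

Definition unit_int (t : R) : Prop := 0 <= t <= 1.

(* a continuous path Gamma : [0,1] -> D (values outside [0,1] are irrelevant) *)
Definition cont_path_D (Gam : R -> PSL2 -> Prop) : Prop :=
  (forall t, unit_int t -> inD (Gam t)) /\
  (forall (u : nat -> R) t, (forall n, unit_int (u n)) -> unit_int t -> rconv u t ->
     chabauty_conv (fun n => Gam (u n)) (Gam t)).

Definition is_interval (I : R -> Prop) : Prop :=
  forall a b x, I a -> I b -> a <= x <= b -> I x.

Definition Gam_path (Gam : R -> PSL2 -> Prop) (s : R) (psi : PSL2)
    (I : R -> Prop) (j : R -> PSL2) : Prop :=
  is_interval I /\ (forall t, I t -> unit_int t) /\ I s /\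
  (forall t, I t -> forall e : R, 0 < e -> exists2 d : R, 0 < d &
      forall t', I t' -> `|t' - t| < d -> pdist (j t') (j t) < e) /\
  (forall t, I t -> Gam t (j t)) /\ j s = psi.

Definition J_rel (Gam : R -> PSL2 -> Prop) (s t : R) (psi phi : PSL2) : Prop :=
  exists I j, Gam_path Gam s psi I j /\ I t /\ j t = phi.

(* J_{s,t}(psi); None stands for the point infinity *)
Definition J (Gam : R -> PSL2 -> Prop) (s t : R) (psi : PSL2) : option PSL2 :=
  epsilon (inhabits None) (fun o => match o with
    | Some phi => J_rel Gam s t psi phi
    | None => ~ exists phi, J_rel Gam s t psi phi end).

End PSL2.

(* Main.v *)
Require Import Defs.
From HB Require Import structures.
From mathcomp Require Import all_boot all_order all_algebra.
From mathcomp Require Import complex reals.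
From mathcomp Require Import classical_sets topology normedtype sequences.
From mathcomp Require Import ring lra.
From Stdlib Require Import Classical ClassicalEpsilon List.
Import Order.TTheory GRing.Theory Num.Theory.
Import numFieldNormedType.Exports.
Local Open Scope ring_scope.
Set Implicit Arguments. Unset Strict Implicit. Unset Printing Implicit Defensive.

Section CA.
Variable R : realType.
Implicit Types z w : R[i].

Lemma cabs_ge0 z : 0 <= cabs z.
Proof. by case: z => a b; rewrite /cabs /= sqrtr_ge0. Qed.

Lemma cabs0 : cabs (0 : R[i]) = 0.
Proof. exact: Normc.normc0. Qed.

Lemma cabs1 : cabs (1 : R[i]) = 1.
Proof. exact: Normc.normc1. Qed.

Lemma cabsD z w : cabs (z + w) <= cabs z + cabs w.
Proof. exact: le_normcD. Qed.

Lemma cabsN z : cabs (- z) = cabs z.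
Proof. exact: normcN. Qed.

Lemma cabsM z w : cabs (z * w) = cabs z * cabs w.
Proof. exact: Normc.normcM. Qed.

Lemma cabsV z : cabs (z^-1) = (cabs z)^-1.
Proof. exact: Normc.normcV. Qed.

Lemma cabs_eq0 z : cabs z = 0 -> z = 0.
Proof. exact: Normc.eq0_normc. Qed.

Lemma cabsB z w : cabs (z - w) <= cabs z + cabs w.
Proof. by rewrite -(cabsN w) cabsD. Qed.

Lemma cabs_sub z w : cabs z - cabs w <= cabs (z - w).
Proof.
have := cabsD (z - w) w; rewrite subrK => h; lra.
Qed.

Lemma cabs_subC z w : cabs (z - w) = cabs (w - z).
Proof. by rewrite -cabsN opprB. Qed.

Lemma cabsX z n : cabs (z ^+ n) = cabs z ^+ n.
Proof. by elim: n => [|n IH]; rewrite ?expr0 ?cabs1 // !exprS cabsM IH. Qed.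

Lemma cabs_Re z : `|complex.Re z| <= cabs z.
Proof.
case: z => a b; rewrite /cabs /= -sqrtr_sqr ler_wsqrtr //.
by rewrite lerDl sqr_ge0.
Qed.

Lemma cabs_Im z : `|complex.Im z| <= cabs z.
Proof.
case: z => a b; rewrite /cabs /= -sqrtr_sqr ler_wsqrtr //.
by rewrite lerDr sqr_ge0.
Qed.

Lemma cabs_ReIm z : cabs z <= `|complex.Re z| + `|complex.Im z|.
Proof.
case: z => a b; rewrite /cabs /=.
rewrite -(@ger0_norm _ (`|a| + `|b|)) ?addr_ge0 //.
rewrite -sqrtr_sqr ler_wsqrtr // sqrrD !real_normK ?num_real //.
rewrite -addrA [_ *+ 2 + _]addrC addrA lerDl mulrn_wge0 // mulr_ge0 //.
Qed.

Lemma cabs_sq z : cabs z ^+ 2 = complex.Re z ^+ 2 + complex.Im z ^+ 2.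
Proof. by case: z => a b; rewrite /cabs /= sqr_sqrtr // addr_ge0 // sqr_ge0. Qed.

Lemma Re_add z w : complex.Re (z + w) = complex.Re z + complex.Re w.
Proof. by case: z; case: w. Qed.
Lemma Im_add z w : complex.Im (z + w) = complex.Im z + complex.Im w.
Proof. by case: z; case: w. Qed.
Lemma Re_opp z : complex.Re (- z) = - complex.Re z.
Proof. by case: z. Qed.
Lemma Im_opp z : complex.Im (- z) = - complex.Im z.
Proof. by case: z. Qed.
Lemma Re_mul z w : complex.Re (z * w) = complex.Re z * complex.Re w - complex.Im z * complex.Im w.
Proof. by case: z; case: w. Qed.
Lemma Im_mul z w : complex.Im (z * w) = complex.Re z * complex.Im w + complex.Im z * complex.Re w.
Proof. by case: z => a b; case: w => c d /=; rewrite addrC [b * c]mulrC. Qed.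
Lemma Re_nat n : complex.Re (n%:R : R[i]) = n%:R.
Proof. by elim: n => // n IH; rewrite -!natr1 Re_add IH. Qed.
Lemma Im_nat n : complex.Im (n%:R : R[i]) = 0.
Proof. by elim: n => // n IH; rewrite -!natr1 Im_add IH add0r. Qed.

Lemma cabs_nat n : cabs (n%:R : R[i]) = n%:R.
Proof.
apply/eqP; rewrite eq_le; apply/andP; split.
  by apply: le_trans (cabs_ReIm _) _; rewrite Re_nat Im_nat normr0 addr0 ger0_norm.
by have := cabs_Re (n%:R : R[i]); rewrite Re_nat ger0_norm.
Qed.

End CA.

Section MX.
Variable R : realType.
Notation Mat := (Mat R).
Implicit Types A B X Y Z : Mat.

Lemma ord2_cases (i : 'I_2) : i = 0 \/ i = 1.
Proof. by case: i => [[|[|//]] ?]; [left|right]; apply/val_inj. Qed.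

Lemma sum2 (T : nmodType) (F : 'I_2 -> T) : \sum_(i < 2) F i = F 0 + F 1.
Proof.
rewrite big_ord_recl big_ord1; congr (_ + F _); exact/val_inj.
Qed.

Lemma mx2_ext A B : A 0 0 = B 0 0 -> A 0 1 = B 0 1 -> A 1 0 = B 1 0 -> A 1 1 = B 1 1 -> A = B.
Proof.
move=> h00 h01 h10 h11; apply/matrixP => i j.
by case: (ord2_cases i) => ->; case: (ord2_cases j) => ->.
Qed.

Lemma mul2E A B i j : (A *m B) i j = A i 0 * B 0 j + A i 1 * B 1 j.
Proof. by rewrite mxE sum2. Qed.

Lemma mulr2E A B i j : (A * B) i j = A i 0 * B 0 j + A i 1 * B 1 j.
Proof. by rewrite -mulmxE mul2E. Qed.

Lemma tr2 A : \tr A = A 0 0 + A 1 1.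
Proof. by rewrite /mxtrace sum2. Qed.

Lemma det2 A : \det A = A 0 0 * A 1 1 - A 0 1 * A 1 0.
Proof.
rewrite (expand_det_row A 0) sum2 /cofactor !det_mx11 !mxE.
have l1 : lift (0 : 'I_2) (0 : 'I_1) = 1 by apply/val_inj.
have l2 : lift (1 : 'I_2) (0 : 'I_1) = 0 by apply/val_inj.
rewrite l1 l2 /= expr0 expr1 mul1r mulN1r mulrN.
by congr (_ - _); rewrite mulrC.
Qed.

Lemma mnormE A : mnorm A = cabs (A 0 0) + cabs (A 0 1) + (cabs (A 1 0) + cabs (A 1 1)).
Proof. by rewrite /mnorm !sum2. Qed.

Lemma mnorm_ge0 A : 0 <= mnorm A.
Proof. by rewrite mnormE !addr_ge0 ?cabs_ge0. Qed.

Lemma mnormD A B : mnorm (A + B) <= mnorm A + mnorm B.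
Proof.
rewrite !mnormE !mxE.
have := cabsD (A 0 0) (B 0 0); have := cabsD (A 0 1) (B 0 1).
have := cabsD (A 1 0) (B 1 0); have := cabsD (A 1 1) (B 1 1). lra.
Qed.

Lemma mnormN A : mnorm (- A) = mnorm A.
Proof. by rewrite !mnormE !mxE !cabsN. Qed.

Lemma mnormB A B : mnorm (A - B) <= mnorm A + mnorm B.
Proof. by rewrite -(mnormN B) mnormD. Qed.

Lemma mnorm_sub A B : mnorm A - mnorm B <= mnorm (A - B).
Proof. have := mnormD (A - B) B; rewrite subrK; lra. Qed.

Lemma mnormBC A B : mnorm (A - B) = mnorm (B - A).
Proof. by rewrite -mnormN opprB. Qed.

Lemma mnorm_eq0 A : mnorm A = 0 -> A = 0.
Proof.
rewrite mnormE => h.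
have := cabs_ge0 (A 0 0); have := cabs_ge0 (A 0 1).
have := cabs_ge0 (A 1 0); have := cabs_ge0 (A 1 1) => *.
apply: mx2_ext; rewrite mxE; apply: cabs_eq0; lra.
Qed.

Lemma mnorm0 : mnorm (0 : Mat) = 0.
Proof. by rewrite mnormE !mxE cabs0 !addr0. Qed.

Lemma mnorm_entry A i j : cabs (A i j) <= mnorm A.
Proof.
rewrite mnormE.
have := cabs_ge0 (A 0 0); have := cabs_ge0 (A 0 1).
have := cabs_ge0 (A 1 0); have := cabs_ge0 (A 1 1) => *.
by case: (ord2_cases i) => ->; case: (ord2_cases j) => ->; lra.
Qed.

Lemma mnorm_tr A : cabs (\tr A) <= mnorm A.
Proof.
rewrite tr2 mnormE; have := cabsD (A 0 0) (A 1 1).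
have := cabs_ge0 (A 0 1); have := cabs_ge0 (A 1 0) => *. lra.
Qed.

Lemma mnormZ (c : R[i]) A : mnorm (c *: A) = cabs c * mnorm A.
Proof. by rewrite !mnormE !mxE !cabsM; ring. Qed.

Lemma mnorm1 : mnorm (1 : Mat) = 2.
Proof.
have e : forall i j : 'I_2, cabs ((1 : Mat) i j) = (i == j)%:R.
  by move=> i j; rewrite mxE -cabs_nat.
rewrite mnormE !e /=; lra.
Qed.

Lemma mnormM A B : mnorm (A * B) <= mnorm A * mnorm B.
Proof.
rewrite !mnormE !mulr2E.
set a00 := A 0 0; set a01 := A 0 1; set a10 := A 1 0; set a11 := A 1 1.
set b00 := B 0 0; set b01 := B 0 1; set b10 := B 1 0; set b11 := B 1 1.
have e : forall x y z w : R[i], cabs (x * y + z * w) <= cabs x * cabs y + cabs z * cabs w.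
  by move=> x y z w; have := cabsD (x * y) (z * w); rewrite !cabsM.
have := e a00 b00 a01 b10; have := e a00 b01 a01 b11.
have := e a10 b00 a11 b10; have := e a10 b01 a11 b11.
have := cabs_ge0 a00; have := cabs_ge0 a01; have := cabs_ge0 a10; have := cabs_ge0 a11.
have := cabs_ge0 b00; have := cabs_ge0 b01; have := cabs_ge0 b10; have := cabs_ge0 b11.
move: (cabs a00) (cabs a01) (cabs a10) (cabs a11) (cabs b00) (cabs b01) (cabs b10) (cabs b11).
move=> x00 x01 x10 x11 y00 y01 y10 y11 *.
nra.
Qed.

End MX.

Section DM.
Variable R : realType.
Notation Mat := (Mat R).
Notation PSL2 := (PSL2 R).
Implicit Types A B C X Y Z : Mat.
Implicit Types p q g h a b : PSL2.

Definition dm X Y : R := Num.min (mnorm (X - Y)) (mnorm (X + Y)).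

Lemma pdistE p q : pdist p q = dm (pmat p) (pmat q).
Proof. by []. Qed.

Lemma dm_cases X Y : dm X Y = mnorm (X - Y) \/ dm X Y = mnorm (X + Y).
Proof. rewrite /dm; case: leP => _; tauto. Qed.

Lemma dm_leB X Y : dm X Y <= mnorm (X - Y).
Proof. by rewrite /dm ge_min lexx. Qed.
Lemma dm_leD X Y : dm X Y <= mnorm (X + Y).
Proof. by rewrite /dm ge_min lexx orbT. Qed.

Lemma dm_ge0 X Y : 0 <= dm X Y.
Proof. by case: (dm_cases X Y) => [->|->]; apply: mnorm_ge0. Qed.

Lemma dmC X Y : dm X Y = dm Y X.
Proof. by rewrite /dm mnormBC [X + Y]addrC. Qed.

Lemma dmNl X Y : dm (- X) Y = dm X Y.
Proof.
rewrite /dm -opprD mnormN -[- X + Y]opprK opprD opprK mnormN minC; done.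
Qed.

Lemma dmNr X Y : dm X (- Y) = dm X Y.
Proof. by rewrite dmC dmNl dmC. Qed.

Lemma dmxx X : dm X X = 0.
Proof. apply/eqP; rewrite eq_le dm_ge0 andbT; by have := dm_leB X X; rewrite subrr mnorm0. Qed.

Lemma dm_tri X Y Z : dm X Z <= dm X Y + dm Y Z.
Proof.
case: (dm_cases X Y) => ->; case: (dm_cases Y Z) => ->.
- apply: le_trans (dm_leB _ _) _; have -> : X - Z = (X - Y) + (Y - Z) by rewrite addrA subrK.
  exact: mnormD.
- apply: le_trans (dm_leD _ _) _; have -> : X + Z = (X - Y) + (Y + Z) by rewrite addrA subrK.
  exact: mnormD.
- apply: le_trans (dm_leD _ _) _; have -> : X + Z = (X + Y) - (Y - Z) by rewrite opprB addrA addrAC addrK.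
  exact: mnormB.
- apply: le_trans (dm_leB _ _) _; have -> : X - Z = (X + Y) - (Y + Z) by rewrite opprD addrA addrK.
  exact: mnormB.
Qed.

Lemma dm_eq0 X Y : dm X Y = 0 -> X = Y \/ X = - Y.
Proof.
case: (dm_cases X Y) => -> /mnorm_eq0 /eqP.
- by rewrite subr_eq0 => /eqP; left.
- by rewrite addr_eq0 => /eqP; right.
Qed.

Lemma dm_mull C X Y : dm (C * X) (C * Y) <= mnorm C * dm X Y.
Proof.
case: (dm_cases X Y) => ->.
- by apply: le_trans (dm_leB _ _) _; rewrite -mulrBr mnormM.
- by apply: le_trans (dm_leD _ _) _; rewrite -mulrDr mnormM.
Qed.

Lemma dm_mulr C X Y : dm (X * C) (Y * C) <= dm X Y * mnorm C.
Proof.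
case: (dm_cases X Y) => ->.
- by apply: le_trans (dm_leB _ _) _; rewrite -mulrBl mnormM.
- by apply: le_trans (dm_leD _ _) _; rewrite -mulrDl mnormM.
Qed.

Lemma dm_mul A B A' B' : dm (A * B) (A' * B') <= mnorm A * dm B B' + dm A A' * mnorm B'.
Proof.
apply: le_trans (dm_tri _ (A * B') _) _.
by apply: lerD; [apply: dm_mull | apply: dm_mulr].
Qed.

Lemma mnorm_le_dm X Y : mnorm X <= mnorm Y + dm X Y.
Proof.
case: (dm_cases X Y) => ->.
- by have := mnorm_sub X Y; lra.
- have := mnorm_sub (X + Y) Y; rewrite addrK => h.
  by have := mnormD (X + Y) (- Y); rewrite addrK mnormN; lra.
Qed.

Lemma dm_lenorm X Y : dm X Y <= mnorm X + mnorm Y.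
Proof. by apply: le_trans (dm_leB _ _) _; apply: mnormB. Qed.

Lemma normalize_pm X : normalize X = X \/ normalize X = - X.
Proof. rewrite /normalize; case: ifP => _; tauto. Qed.

Lemma dm_normalize_l X Y : dm (normalize X) Y = dm X Y.
Proof. by case: (normalize_pm X) => ->; rewrite ?dmNl. Qed.
Lemma dm_normalize_r X Y : dm X (normalize Y) = dm X Y.
Proof. by case: (normalize_pm Y) => ->; rewrite ?dmNr. Qed.

Lemma pos_c_N (z : R[i]) : pos_c z -> ~~ pos_c (- z).
Proof.
case: z => a b; rewrite /pos_c /= oppr_gt0 oppr_eq0.
case/orP => [ha|/andP[/eqP -> hb]].
  by rewrite negb_or (lt_gtF ha) /= negb_and (gt_eqF ha).
by rewrite ltxx /= eqxx /= oppr_gt0 -leNgt ltW.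
Qed.

Lemma normalized_N X : normalized X -> ~~ normalized (- X).
Proof. by rewrite /normalized lead_entryN; apply: pos_c_N. Qed.

Lemma pmat_det p : \det (pmat p) = 1.
Proof. by case: p => A hA /=; case/andP: hA => /eqP. Qed.

Lemma pmat_normalized p : normalized (pmat p).
Proof. by case: p => A hA /=; case/andP: hA. Qed.

Lemma pmat_inj p q : pmat p = pmat q -> p = q.
Proof.
case: p q => A hA [B hB] /= eAB; subst B.
by rewrite (bool_irrelevance hA hB).
Qed.

Lemma pmat_opp p q : pmat p = - pmat q -> False.
Proof.
move=> e; have := pmat_normalized p; rewrite e.
by move/normalized_N; rewrite opprK pmat_normalized.
Qed.

Lemma pmat_pm p q : pmat p = pmat q \/ pmat p = - pmat q -> p = q.
Proof. by case=> [/pmat_inj //|/pmat_opp]. Qed.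

Lemma pdist_eq0 p q : pdist p q = 0 -> p = q.
Proof. by rewrite pdistE => /dm_eq0 /pmat_pm. Qed.

Lemma pdist_ge0 p q : 0 <= pdist p q.
Proof. exact: dm_ge0. Qed.
Lemma pdistC p q : pdist p q = pdist q p.
Proof. exact: dmC. Qed.
Lemma pdistxx p : pdist p p = 0.
Proof. exact: dmxx. Qed.
Lemma pdist_tri p q r : pdist p r <= pdist p q + pdist q r.
Proof. exact: dm_tri. Qed.

Lemma normalized1 : normalized (1 : Mat).
Proof.
rewrite /normalized /lead_entry !mxE /= oner_eq0 /= /pos_c.
by rewrite /= ltr01.
Qed.

Lemma pmat_pone : pmat (pone R) = 1.
Proof. by rewrite /= /normalize normalized1. Qed.

Lemma pmat_pmul p q : pmat (pmul p q) = normalize (pmat p * pmat q).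
Proof. by rewrite /= mulmxE. Qed.

Lemma adj2E A i j : \adj A i j =
  if i == j then (if i == 0 then A 1 1 else A 0 0) else - A i j.
Proof.
have l1 : lift (0 : 'I_2) (0 : 'I_1) = 1 by apply/val_inj.
have l2 : lift (1 : 'I_2) (0 : 'I_1) = 0 by apply/val_inj.
rewrite mxE /cofactor det_mx11 !mxE.
by case: (ord2_cases i) => ->; case: (ord2_cases j) => ->;
  rewrite /= ?l1 ?l2 /= ?expr0 ?expr1 ?mul1r ?mulN1r ?expr2 ?mulrNN ?mul1r.
Qed.

Lemma invmx_adj A : \det A = 1 -> invmx A = \adj A.
Proof. by move=> h; rewrite /invmx unitmxE h unitr1 invr1 scale1r. Qed.

Lemma mnorm_adj A : mnorm (\adj A) = mnorm A.
Proof. by rewrite !mnormE !adj2E /= !cabsN; ring. Qed.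

Lemma mDE A B i j : (A + B) i j = A i j + B i j. Proof. by rewrite mxE. Qed.
Lemma mNE A i j : (- A) i j = - A i j. Proof. by rewrite mxE. Qed.

Lemma adjB A B : \adj A - \adj B = \adj (A - B).
Proof. by apply: mx2_ext; rewrite !mDE !mNE !adj2E /= !mDE !mNE // opprD. Qed.
Lemma adjD A B : \adj A + \adj B = \adj (A + B).
Proof. by apply: mx2_ext; rewrite !mDE !adj2E /= !mDE // opprD. Qed.

Lemma dm_adj A B : dm (\adj A) (\adj B) = dm A B.
Proof. by rewrite /dm adjB adjD !mnorm_adj. Qed.

Lemma pmat_pinv p : pmat (pinv p) = normalize (\adj (pmat p)).
Proof. by rewrite /= invmx_adj // pmat_det. Qed.

Lemma adj_mul A : \det A = 1 -> \adj A * A = 1.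
Proof. by move=> h; rewrite -mulmxE mul_adj_mx h. Qed.
Lemma mul_adj A : \det A = 1 -> A * \adj A = 1.
Proof. by move=> h; rewrite -mulmxE mul_mx_adj h. Qed.

Lemma normalize_mull X Y : normalize X * Y = X * Y \/ normalize X * Y = - (X * Y).
Proof. by case: (normalize_pm X) => ->; [left|right; rewrite mulNr]. Qed.

Lemma dm_nml X Y Z : dm (normalize X * Y) Z = dm (X * Y) Z.
Proof. by case: (normalize_mull X Y) => ->; rewrite ?dmNl. Qed.

Lemma dm_nmr X Y Z : dm (Y * normalize X) Z = dm (Y * X) Z.
Proof. by case: (normalize_pm X) => ->; rewrite ?mulrN ?dmNl. Qed.

Lemma pdist_pmul a b (a' b' : PSL2) :
  pdist (pmul a b) (pmul a' b') <=
  mnorm (pmat a) * pdist b b' + pdist a a' * mnorm (pmat b').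
Proof.
by rewrite !pdistE !pmat_pmul dm_normalize_l dm_normalize_r dm_mul.
Qed.

Lemma pdist_pinv a b : pdist (pinv a) (pinv b) = pdist a b.
Proof. by rewrite !pdistE !pmat_pinv dm_normalize_l dm_normalize_r dm_adj. Qed.

Lemma mnorm_pinv a : mnorm (pmat (pinv a)) = mnorm (pmat a).
Proof. by rewrite pmat_pinv; case: (normalize_pm (\adj (pmat a))) => ->; rewrite ?mnormN mnorm_adj. Qed.

Lemma pdist_pinvmul g h :
  pdist (pmul (pinv g) h) (pone R) <= mnorm (pmat g) * pdist g h.
Proof.
rewrite pdistE pmat_pmul pmat_pone dm_normalize_l pmat_pinv dm_nml.
rewrite -(adj_mul (pmat_det g)) -(mnorm_adj (pmat g)) pdistC pdistE.
exact: dm_mull.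
Qed.

Lemma pinvmul_one g h : pmul (pinv g) h = pone R -> g = h.
Proof.
move=> e; have := congr1 (@pmat R) e; rewrite pmat_pmul pmat_pone pmat_pinv.
move=> e2; apply: pmat_pm.
have : normalize (\adj (pmat g)) * pmat h = 1 \/ normalize (\adj (pmat g)) * pmat h = - 1.
  by case: (normalize_pm (normalize (\adj (pmat g)) * pmat h)) => h1; rewrite -e2 h1 ?opprK; tauto.
have hm : forall X, pmat g * (\adj (pmat g) * X) = X.
  by move=> X; rewrite mulrA mul_adj ?mul1r // pmat_det.
case: (normalize_pm (\adj (pmat g))) => ->; rewrite ?mulNr.
- case=> h1; [left|right]; rewrite -(hm (pmat h)) h1 ?mulrN mulr1 ?opprK //.
- case=> h1; [right|left]; rewrite -(hm (pmat h)); move/eqP: h1;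
   rewrite ?eqr_oppLR => /eqP -> ; rewrite ?mulrN mulr1 ?opprK //.
Qed.

Lemma pmat_ppow g n : pmat (ppow g n) = pmat g ^+ n \/ pmat (ppow g n) = - pmat g ^+ n.
Proof.
elim: n => [|n IH].
  by left; have -> : ppow g 0 = pone R by []; rewrite pmat_pone expr0.
have -> : ppow g n.+1 = pmul g (ppow g n) by [].
rewrite pmat_pmul exprS.
case: (normalize_pm (pmat g * pmat (ppow g n))) => ->; case: IH => ->;
  rewrite ?mulrN ?opprK; tauto.
Qed.

Lemma pdist_ppow1 g n : pdist (ppow g n) (pone R) = dm (pmat g ^+ n) 1.
Proof. by rewrite pdistE pmat_pone; case: (pmat_ppow g n) => ->; rewrite ?dmNl. Qed.

Lemma pdist1 g : pdist g (pone R) = dm (pmat g) 1.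
Proof. by rewrite pdistE pmat_pone. Qed.

Lemma mnorm_pmat_le g h : mnorm (pmat g) <= mnorm (pmat h) + pdist g h.
Proof. exact: mnorm_le_dm. Qed.

End DM.

Section ESC.
Variable R : realType.
Notation Mat := (Mat R).
Implicit Types A B M N : Mat.

Lemma scal1E (c : R[i]) (i j : 'I_2) : (c *: (1 : Mat)) i j = if i == j then c else 0.
Proof. by rewrite !mxE; case: (i == j); rewrite ?mulr1 ?mulr0. Qed.
Lemma oneE (i j : 'I_2) : (1 : Mat) i j = if i == j then 1 else 0.
Proof. by rewrite !mxE; case: (i == j). Qed.
Lemma scalE (c : R[i]) A i j : (c *: A) i j = c * A i j.
Proof. by rewrite mxE. Qed.

Lemma tr1 : \tr (1 : Mat) = 2.
Proof. by rewrite tr2 !oneE. Qed.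

Lemma trB1 M : \tr (M - 1) = \tr M - 2.
Proof. by rewrite !tr2 !mDE !mNE !oneE /=; ring. Qed.
Lemma trD1 M : \tr (M + 1) = \tr M + 2.
Proof. by rewrite !tr2 !mDE !oneE /=; ring. Qed.
Lemma trZ (c : R[i]) M : \tr (c *: M) = c * \tr M.
Proof. by rewrite !tr2 !scalE; ring. Qed.
Lemma trD M N : \tr (M + N) = \tr M + \tr N.
Proof. by rewrite !tr2 !mDE; ring. Qed.

Lemma CH A : \det A = 1 -> A * A = \tr A *: A - 1.
Proof.
rewrite det2 tr2 => hd.
apply: mx2_ext; rewrite mulr2E mDE mNE scalE oneE /=.
- by rewrite -hd; ring.
- ring.
- ring.
- by rewrite -hd; ring.
Qed.

Lemma tr_rec A k : \det A = 1 ->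
  \tr (A ^+ k.+2) = \tr A * \tr (A ^+ k.+1) - \tr (A ^+ k).
Proof.
move=> hd; rewrite exprSr exprSr -mulrA CH // mulrBr mulr1 -scalerAr -exprSr.
by rewrite mxtraceD mxtraceZ raddfN.
Qed.

Lemma tr_root A (l : R[i]) : \det A = 1 -> l != 0 -> l + l^-1 = \tr A ->
  forall k, \tr (A ^+ k) = l ^+ k + l^-1 ^+ k.
Proof.
move=> hd l0 hl.
suff : forall k, \tr (A ^+ k) = l ^+ k + l^-1 ^+ k /\ \tr (A ^+ k.+1) = l ^+ k.+1 + l^-1 ^+ k.+1.
  by move=> h k; case: (h k).
elim=> [|k [IH1 IH2]].
  by rewrite !expr0 expr1 tr1 hl; split => //.
split => //; rewrite tr_rec // IH1 IH2 -hl.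
rewrite !exprS; field; done.
Qed.

Lemma dm_tr M : Num.min (cabs (\tr M - 2)) (cabs (\tr M + 2)) <= dm M 1.
Proof.
case: (dm_cases M 1) => ->.
- apply: le_trans (mnorm_tr _); rewrite trB1 ge_min lexx //.
- apply: le_trans (mnorm_tr _); rewrite trD1 ge_min lexx orbT //.
Qed.

Lemma mx_archi (c : R) : 0 < c -> exists k : nat, 1 <= k%:R * c.
Proof.
move=> c0; exists (Num.Def.archi_bound (c^-1)).
have ci : 0 < c^-1 by rewrite invr_gt0.
have := @archi_boundP _ (c^-1) (ltW ci).
move: (_%:R) => x h.
have h' := ltW h; rewrite -(ler_pM2r c0) mulVf ?gt_eqF // in h'.
Qed.

Lemma esc_parab A : \det A = 1 -> \tr A = 2 -> A != 1 -> exists k, 1/4 <= dm (A ^+ k) 1.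
Proof.
move=> hd ht hA.
set N := A - 1.
have hN2 : N * N = 0.
  rewrite /N mulrBr !mulrBl !mulr1 !mul1r CH // ht.
  by apply: mx2_ext; rewrite !mDE !mNE scalE !oneE !mxE /=; ring.
have hpow : forall k, A ^+ k = 1 + k%:R *: N.
  elim=> [|k IH]; first by rewrite expr0 scale0r addr0.
  rewrite exprSr IH.
  have -> : A = 1 + N by rewrite /N addrC subrK.
  rewrite mulrDr mulr1 mulrDl mul1r -scalerAl hN2 scaler0 addr0.
  by rewrite -addrA -natr1 scalerDl scale1r.
have hN0 : 0 < mnorm N.
  rewrite lt_neqAle mnorm_ge0 andbT eq_sym; apply/eqP => /mnorm_eq0 /eqP.
  by rewrite subr_eq0 (negbTE hA).
have htrN : \tr N = 0 by rewrite /N trB1 ht subrr.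
have [k hk] := mx_archi hN0.
exists k; rewrite hpow.
case: (dm_cases (1 + k%:R *: N) 1) => ->.
- rewrite addrAC subrr add0r mnormZ cabs_nat; apply: le_trans hk; lra.
- apply: le_trans (mnorm_tr _).
  rewrite trD1 trD trZ htrN mulr0 tr1 addr0.
  rewrite -natrD cabs_nat; lra.
Qed.

End ESC.

Section ESC2.
Variable R : realType.
Notation Mat := (Mat R).
Implicit Types A B M N : Mat.

Lemma inv_unit (z : R[i]) : cabs z = 1 ->
  complex.Re (z^-1) = complex.Re z /\ complex.Im (z^-1) = - complex.Im z.
Proof.
move=> h; have := cabs_sq z; rewrite h expr1n => e.
case: z e h => a b /= e _.
by rewrite -e !divr1.
Qed.

Lemma avg (nu : R[i]) : cabs nu = 1 -> nu != 1 -> exists k, complex.Re (nu ^+ k) < 1/2.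
Proof.
move=> h1 hn1; apply: NNPP => hn.
have hk : forall k, 1/2 <= complex.Re (nu ^+ k).
  by move=> k; rewrite leNgt; apply/negP => h; apply: hn; exists k.
pose S n := \sum_(k < n) nu ^+ k.
have SS : forall n, S n.+1 = S n + nu ^+ n by move=> n; rewrite /S big_ord_recr.
have hS : forall n, (nu - 1) * S n = nu ^+ n - 1.
  elim=> [|n IH]; first by rewrite /S big_ord0 mulr0 expr0 subrr.
  by rewrite SS mulrDr IH exprS; ring.
have hRe : forall n, n%:R / 2 <= complex.Re (S n).
  elim=> [|n IH]; first by rewrite /S big_ord0 mul0r.
  rewrite SS Re_add -natr1 mulrDl; apply: lerD => //.
set c := cabs (nu - 1).
have c0 : 0 < c.
  rewrite lt_neqAle cabs_ge0 andbT eq_sym; apply/eqP => /cabs_eq0 /eqP.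
  by rewrite subr_eq0 (negbTE hn1).
have hb : forall n, c * cabs (S n) <= 2.
  move=> n; rewrite -cabsM hS; apply: le_trans (cabsB _ _) _.
  by rewrite cabsX h1 expr1n cabs1; lra.
have c8 : 0 < c / 8 by lra.
have [k hk1] := mx_archi c8.
have h2 := hRe k; have h3 := cabs_Re (S k); have h4 := hb k.
have h5 : complex.Re (S k) <= cabs (S k) by apply: le_trans (ler_norm _) h3.
have h6 : c * (k%:R / 2) <= c * cabs (S k).
  by apply: ler_wpM2l; [lra | apply: le_trans h2 h5].
nra.
Qed.

Lemma cabs_low (u v w : R[i]) : cabs u - cabs v - cabs w <= cabs (u + v + w).
Proof.
have : cabs u <= cabs (u + v + w) + cabs v + cabs w.
  have e : u = (u + v + w) - v - w by ring.
  have h1 := cabsB (u + v + w - v) w; have h2 := cabsB (u + v + w) v.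
  rewrite {1}e; lra.
lra.
Qed.

Lemma esc_unit A (l : R[i]) : \det A = 1 -> l != 0 -> l + l^-1 = \tr A ->
  cabs l = 1 -> l ^+ 2 != 1 -> exists k, 1/4 <= dm (A ^+ k) 1.
Proof.
move=> hd l0 hl h1 hl2.
have hc2 : cabs (l ^+ 2) = 1 by rewrite cabsX h1 expr1n.
have [k hk] := avg hc2 hl2.
exists k; apply: le_trans (dm_tr _).
rewrite (tr_root hd l0 hl) exprVn.
set mu := l ^+ k.
have hmu : cabs mu = 1 by rewrite /mu cabsX h1 expr1n.
have [e1 e2] := inv_unit hmu.
have hsq := cabs_sq mu; rewrite hmu expr1n in hsq.
have hre : complex.Re (mu * mu) < 1/2 by rewrite -expr2 /mu -exprM mulnC exprM.
rewrite Re_mul in hre.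
set a := complex.Re mu in hsq hre e1 *; set b := complex.Im mu in hsq hre e2 *.
have ha : a < 7/8 by nra.
have ha' : - (7/8) < a by nra.
have hRe2 : forall s : R[i], complex.Re s = 2 -> cabs (mu + mu^-1 - s) >= `|2 * a - 2|.
  move=> s hs; apply: le_trans (cabs_Re _).
  by rewrite Re_add Re_opp Re_add e1 hs -/a; rewrite (_ : a + a = 2 * a) //; ring.
have hRe3 : forall s : R[i], complex.Re s = 2 -> cabs (mu + mu^-1 + s) >= `|2 * a + 2|.
  move=> s hs; apply: le_trans (cabs_Re _).
  by rewrite Re_add Re_add e1 hs -/a; rewrite (_ : a + a = 2 * a) //; ring.
have R2 : complex.Re (2 : R[i]) = 2 by rewrite Re_nat.
rewrite le_min; apply/andP; split.
- apply: le_trans (hRe2 _ R2); rewrite ler_normr; apply/orP; right; lra.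
- apply: le_trans (hRe3 _ R2); rewrite ler_normr; apply/orP; left; lra.
Qed.

Lemma bernoulli (x : R) k : 1 <= x -> 1 + k%:R * (x - 1) <= x ^+ k.
Proof.
move=> hx; elim: k => [|k IH]; first by rewrite mul0r addr0 expr0.
rewrite exprS -natr1.
have h0 : 0 <= k%:R :> R by [].
have h2 : (1 + k%:R * (x - 1)) * x <= x ^+ k * x by apply: ler_wpM2r; lra.
have h3 : 0 <= k%:R * ((x - 1) * (x - 1)) by apply: mulr_ge0 => //; nra.
rewrite [x * _]mulrC; nra.
Qed.

Lemma esc_big A (r : R[i]) : \det A = 1 -> r != 0 -> r + r^-1 = \tr A ->
  1 < cabs r -> exists k, 1/4 <= dm (A ^+ k) 1.
Proof.
move=> hd r0 hr h1.
have c4 : 0 < (cabs r - 1) / 4 by lra.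
have [k hk] := mx_archi c4.
exists k; apply: le_trans (dm_tr _).
rewrite (tr_root hd r0 hr) exprVn.
have hX : 5 <= cabs (r ^+ k).
  rewrite cabsX; have := bernoulli k (ltW h1); lra.
set X := cabs (r ^+ k) in hX.
have hXi : cabs ((r ^+ k)^-1) = X^-1 by rewrite cabsV.
have X0 : 0 < X by lra.
have hXi0 : 0 <= X^-1 by rewrite invr_ge0; lra.
have hXi' : X^-1 <= 1/5.
  have X0n : X != 0 by rewrite gt_eqF.
  have := mulVf X0n; nra.
have c2 : cabs (2 : R[i]) = 2 by rewrite cabs_nat.
have c2' : cabs (- 2 : R[i]) = 2 by rewrite cabsN cabs_nat.
rewrite le_min; apply/andP; split.
- apply: le_trans (cabs_low _ _ _); rewrite hXi c2' -/X; lra.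
- apply: le_trans (cabs_low _ _ _); rewrite hXi c2 -/X; lra.
Qed.

Lemma oppX_pm A k : (- A) ^+ k = A ^+ k \/ (- A) ^+ k = - A ^+ k.
Proof.
elim: k => [|k IH]; first by left; rewrite !expr0.
rewrite !exprS; case: IH => ->; rewrite ?mulrN ?mulNr ?opprK; tauto.
Qed.

Lemma escape A : \det A = 1 -> A != 1 -> A != - 1 -> exists k, 1/4 <= dm (A ^+ k) 1.
Proof.
move=> hd hA1 hA2.
have [ht2|ht2] := eqVneq (\tr A) 2; first exact: esc_parab.
have [htm2|htm2] := eqVneq (\tr A) (- 2).
  have hd' : \det (- A) = 1 by rewrite det2 !mNE mulrNN [_ * - _]mulrN mulNr opprK -det2.
  have ht' : \tr (- A) = 2 by rewrite tr2 !mNE -opprD -tr2 htm2 opprK.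
  have hA' : - A != 1 by rewrite eqr_oppLR.
  have [k hk] := esc_parab hd' ht' hA'.
  by exists k; case: (oppX_pm A k) hk => ->; rewrite ?dmNl.
set t := \tr A in ht2 htm2.
set r := sqrtC (t ^+ 2 - 4).
have hr : r ^+ 2 = t ^+ 2 - 4 by rewrite sqrtCK.
set l := (t + r) / 2.
have hl : l ^+ 2 - t * l + 1 = 0.
  have -> : l ^+ 2 - t * l + 1 = (r ^+ 2 - t ^+ 2 + 4) / 4 by rewrite /l; field.
  by rewrite hr; ring.
have l0 : l != 0.
  by apply/eqP => e; move: hl; rewrite e expr0n /= mulr0 subrr add0r => /eqP; rewrite oner_eq0.
have hlt : l + l^-1 = t.
  apply: (mulIf l0); rewrite mulrDl mulVf // -expr2.
  by move/eqP: hl; rewrite addrAC subr_eq0 => /eqP ->.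
have hl2 : l ^+ 2 != 1.
  apply/eqP => e.
  have e2 : l^-1 = l by apply: (mulIf l0); rewrite mulVf // -expr2 e.
  have : t ^+ 2 = 4.
    rewrite -hlt e2; have -> : (l + l) ^+ 2 = 4 * l ^+ 2 by ring.
    by rewrite e mulr1.
  move/eqP; rewrite -subr_eq0 (_ : t ^+ 2 - 4 = (t - 2) * (t + 2)); last by ring.
  rewrite mulf_eq0 subr_eq0 addr_eq0 (negbTE ht2) (negbTE htm2) //.
have [h1|h1|h1] := ltgtP (cabs l) 1.
- apply: (@esc_big A l^-1) => //.
  + by rewrite invr_eq0.
  + by rewrite invrK addrC.
  + have lp : 0 < cabs l.
      rewrite lt_neqAle cabs_ge0 andbT eq_sym; apply/eqP => /cabs_eq0 /eqP.
      by rewrite (negbTE l0).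
    by rewrite cabsV invf_gt1.
- exact: (@esc_big A l).
- exact: (@esc_unit A l).
Qed.

End ESC2.

Section BW.
Variable R : realType.
Notation Mat := (Mat R).
Notation PSL2 := (PSL2 R).

Lemma bw_real (u : nat -> R) (M : R) : (forall n, `|u n| <= M) ->
  exists f : nat -> nat, (forall n, (f n < f n.+1)%N) /\
   exists l, forall e, 0 < e -> exists N, forall n, (N <= n)%N -> `|u (f n) - l| < e.
Proof.
move=> hM.
have bu : bounded_fun u.
  exists M; split; first by rewrite num_real.
  by move=> x Mx y _ /=; apply: ltW; apply: le_lt_trans (hM y) Mx.
have [f finc fcv] := bolzano_weierstrass bu.
exists f; split.
  by move=> n; have := finc n.+1 n; rewrite leEnat => h; rewrite ltnNge h ltnn.
move/cvg_ex: fcv => [l hl].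
exists l => e e0.
have := (fcvgrPdist_lt _).1 hl e e0.
case=> N _ hN; exists N => n hn.
by rewrite distrC; apply: hN.
Qed.

Definition rconv' (u : nat -> R) (l : R) :=
  forall e, 0 < e -> exists N, forall n, (N <= n)%N -> `|u n - l| < e.

Lemma sinc_ge (f : nat -> nat) : (forall n, (f n < f n.+1)%N) -> forall n, (n <= f n)%N.
Proof. by move=> hf; elim=> // n IH; apply: leq_ltn_trans IH (hf n). Qed.

Lemma sinc_comp (f g : nat -> nat) : (forall n, (f n < f n.+1)%N) -> (forall n, (g n < g n.+1)%N) ->
  forall n, (f (g n) < f (g n.+1))%N.
Proof.
move=> hf hg n.
have mono : forall a b, (a < b)%N -> (f a < f b)%N.
  move=> a b; elim: b => // b IH; rewrite ltnS leq_eqVlt => /orP[/eqP ->|/IH h].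
    exact: hf.
  exact: ltn_trans h (hf b).
exact: mono.
Qed.

Lemma rconv_sub (u : nat -> R) l (g : nat -> nat) : (forall n, (g n < g n.+1)%N) ->
  rconv' u l -> rconv' (fun n => u (g n)) l.
Proof.
move=> hg hu e e0; have [N hN] := hu e e0; exists N => n hn.
by apply: hN; apply: leq_trans hn (sinc_ge hg n).
Qed.

Lemma multi_bw (T : Type) (x : nat -> T) (cs : list (T -> R)) (M : R) :
  (forall c, In c cs -> forall n, `|c (x n)| <= M) ->
  exists f : nat -> nat, (forall n, (f n < f n.+1)%N) /\
    forall c, In c cs -> exists l, rconv' (fun n => c (x (f n))) l.
Proof.
elim: cs => [|c cs IH] hb.
  by exists id; split => //.
have [f [hf hl]] := IH (fun c' hc' => hb c' (or_intror hc')).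
have [g [hg [l hl2]]] := bw_real (fun n => hb c (or_introl erefl) (f n)).
exists (fun n => f (g n)); split; first exact: sinc_comp.
move=> c' [<-|hc'].
  by exists l.
have [l' hl'] := hl c' hc'.
by exists l'; exact: (@rconv_sub (fun n => c' (x (f n))) l' g hg hl').
Qed.

Lemma le0_small (x : R) : (forall e, 0 < e -> x < e) -> x <= 0.
Proof.
move=> h; rewrite leNgt; apply/negP => x0.
by have := h x x0; rewrite ltxx.
Qed.

Lemma entry_conv (x : nat -> R[i]) a b :
  rconv' (fun n => complex.Re (x n)) a -> rconv' (fun n => complex.Im (x n)) b ->
  forall e, 0 < e -> exists N, forall n, (N <= n)%N -> cabs (x n - (Complex a b)) < e.
Proof.
move=> ha hb e e0; have e2 : 0 < e / 2 by lra.
have [N1 h1] := ha _ e2; have [N2 h2] := hb _ e2.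
exists (maxn N1 N2) => n; rewrite geq_max => /andP[n1 n2].
apply: le_lt_trans (cabs_ReIm _) _.
rewrite Re_add Im_add Re_opp Im_opp /=.
have := h1 n n1; have := h2 n n2; lra.
Qed.

Lemma prod_diff (x y x' y' : R[i]) (K d : R) : cabs x <= K -> cabs (y - y') <= d ->
  cabs (x - x') <= d -> cabs y' <= K + d -> cabs (x * y - x' * y') <= K * d + d * (K + d).
Proof.
move=> h1 h2 h3 h4.
have -> : x * y - x' * y' = x * (y - y') + (x - x') * y' by ring.
apply: le_trans (cabsD _ _) _; rewrite !cabsM.
have := cabs_ge0 x; have := cabs_ge0 (y - y'); have := cabs_ge0 (x - x'); have := cabs_ge0 y'.
move=> *; apply: lerD; apply: ler_pM => //.
Qed.

Lemma psl_cluster (psi : nat -> PSL2) (M : R) :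
  (forall n, mnorm (pmat (psi n)) <= M) -> exists g, paccum psi g.
Proof.
move=> hM.
pose e00 (A : Mat) := A 0 0. pose e01 (A : Mat) := A 0 1.
pose e10 (A : Mat) := A 1 0. pose e11 (A : Mat) := A 1 1.
pose cs : list (Mat -> R) :=
  [:: (fun A => complex.Re (e00 A)); (fun A => complex.Im (e00 A));
      (fun A => complex.Re (e01 A)); (fun A => complex.Im (e01 A));
      (fun A => complex.Re (e10 A)); (fun A => complex.Im (e10 A));
      (fun A => complex.Re (e11 A)); (fun A => complex.Im (e11 A))].
have hb : forall c, In c cs -> forall n, `|c (pmat (psi n))| <= M.
  move=> c hc n.
  have hRe : forall i j, `|complex.Re (pmat (psi n) i j)| <= M.
    by move=> i j; apply: le_trans (cabs_Re _) _; apply: le_trans (mnorm_entry _ i j) (hM n).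
  have hIm : forall i j, `|complex.Im (pmat (psi n) i j)| <= M.
    by move=> i j; apply: le_trans (cabs_Im _) _; apply: le_trans (mnorm_entry _ i j) (hM n).
  move: hc; rewrite /cs /=.
  by do 8! (case=> [<-|]; first by rewrite /e00 /e01 /e10 /e11 /=; (apply: hRe || apply: hIm)).
have [f [hf hl]] := @multi_bw Mat (fun n => pmat (psi n)) cs M hb.
have i1 : In (fun A : Mat => complex.Re (e00 A)) cs by rewrite /cs /=; tauto.
have i2 : In (fun A : Mat => complex.Im (e00 A)) cs by rewrite /cs /=; tauto.
have i3 : In (fun A : Mat => complex.Re (e01 A)) cs by rewrite /cs /=; tauto.
have i4 : In (fun A : Mat => complex.Im (e01 A)) cs by rewrite /cs /=; tauto.
have i5 : In (fun A : Mat => complex.Re (e10 A)) cs by rewrite /cs /=; tauto.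
have i6 : In (fun A : Mat => complex.Im (e10 A)) cs by rewrite /cs /=; tauto.
have i7 : In (fun A : Mat => complex.Re (e11 A)) cs by rewrite /cs /=; tauto.
have i8 : In (fun A : Mat => complex.Im (e11 A)) cs by rewrite /cs /=; tauto.
have [a1 h1] := hl _ i1; have [a2 h2] := hl _ i2; have [a3 h3] := hl _ i3.
have [a4 h4] := hl _ i4; have [a5 h5] := hl _ i5; have [a6 h6] := hl _ i6.
have [a7 h7] := hl _ i7; have [a8 h8] := hl _ i8.
pose X n := pmat (psi (f n)).
have c00 := entry_conv h1 h2; have c01 := entry_conv h3 h4.
have c10 := entry_conv h5 h6; have c11 := entry_conv h7 h8.
pose L : Mat := \matrix_(i, j) (if i == 0 then (if j == 0 then Complex a1 a2 else Complex a3 a4)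
                                else (if j == 0 then Complex a5 a6 else Complex a7 a8)).
have L00 : L 0 0 = Complex a1 a2 by rewrite mxE.
have L01 : L 0 1 = Complex a3 a4 by rewrite mxE.
have L10 : L 1 0 = Complex a5 a6 by rewrite mxE.
have L11 : L 1 1 = Complex a7 a8 by rewrite mxE.
have hconv : forall e, 0 < e -> exists N, forall n, (N <= n)%N -> mnorm (X n - L) < e.
  move=> e e0; have e4 : 0 < e / 4 by lra.
  have [N1 hN1] := c00 _ e4; have [N2 hN2] := c01 _ e4.
  have [N3 hN3] := c10 _ e4; have [N4 hN4] := c11 _ e4.
  exists (maxn (maxn N1 N2) (maxn N3 N4)) => n hn.
  rewrite !geq_max in hn; case/andP: hn => /andP[n1 n2] /andP[n3 n4].
  have := hN1 n n1; have := hN2 n n2; have := hN3 n n3; have := hN4 n n4.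
  rewrite mnormE !mDE !mNE L00 L01 L10 L11 /X /e00 /e01 /e10 /e11 /=; lra.
have M0 : 0 <= M by apply: le_trans (mnorm_ge0 _) (hM 0%N).
have hdet : \det L = 1.
  have : cabs (1 - \det L) <= 0.
    apply: le0_small => e e0.
    have ee : 0 < Num.min 1 (e / (4 * M + 4)).
      by rewrite lt_min ltr01 /= divr_gt0 //; lra.
    have [N hN] := hconv _ ee.
    have hd := hN N (leqnn N).
    have hd1 : mnorm (X N - L) < 1 by apply: lt_le_trans hd _; rewrite ge_min lexx.
    have hd2 : mnorm (X N - L) < e / (4 * M + 4) by apply: lt_le_trans hd _; rewrite ge_min lexx orbT.
    set d := mnorm (X N - L) in hd1 hd2.
    have hdX : \det (X N) = 1 by rewrite /X pmat_det.
    have ent : forall i j, cabs (X N i j - L i j) <= d.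
      by move=> i j; rewrite /d; apply: le_trans (mnorm_entry _ i j); rewrite mDE mNE.
    have entX : forall i j, cabs (X N i j) <= M.
      by move=> i j; apply: le_trans (mnorm_entry _ i j) (hM _).
    have entL : forall i j, cabs (L i j) <= M + d.
      move=> i j; have := cabsB (X N i j) (X N i j - L i j).
      rewrite opprB addrC subrK => h; have := ent i j; have := entX i j; lra.
    have p1 := prod_diff (entX 0 0) (ent 1 1) (ent 0 0) (entL 1 1).
    have p2 := prod_diff (entX 0 1) (ent 1 0) (ent 0 1) (entL 1 0).
    have e1 : 1 - \det L = (X N 0 0 * X N 1 1 - L 0 0 * L 1 1) - (X N 0 1 * X N 1 0 - L 0 1 * L 1 0).
      by rewrite -hdX !det2; ring.
    rewrite e1; apply: le_lt_trans (cabsB _ _) _.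
    have d0 : 0 <= d by apply: mnorm_ge0.
    have : d * (4 * M + 4) < e.
      by rewrite -ltr_pdivlMr //; lra.
    nra.
  move=> h; have h0 : cabs (1 - \det L) = 0 by apply/eqP; rewrite eq_le h cabs_ge0.
  by move/cabs_eq0/eqP: h0; rewrite subr_eq0 => /eqP <-.
exists (MkPSL2 (is_psl_normalize hdet)).
move=> e e0 N; have [N' hN'] := hconv e e0.
exists (f (maxn N N')).
  by apply: leq_trans (sinc_ge hf _); rewrite leq_maxl.
rewrite pdistE /= dm_normalize_r; apply: le_lt_trans (dm_leB _ _) _.
by apply: hN'; rewrite leq_maxr.
Qed.

End BW.

Section CONN.
Variable R : realType.

Definition openP (I P : R -> Prop) := forall t, I t -> P t ->
  exists2 d : R, 0 < d & forall t', I t' -> `|t' - t| < d -> P t'.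
Definition closedP (I P : R -> Prop) := forall t, I t ->
  (forall d : R, 0 < d -> exists t', [/\ I t', `|t' - t| < d & P t']) -> P t.

Lemma conn_fwd (I P : R -> Prop) p : Defs.is_interval I -> I p -> P p ->
  openP I P -> closedP I P -> forall t, I t -> p <= t -> P t.
Proof.
move=> hI Ip Pp ho hc t It pt; apply: NNPP => nPt.
pose S : set R := fun u => p <= u <= t /\ forall v, p <= v <= u -> P v.
have Sp : S p.
  split; first by rewrite lexx pt.
  by move=> v /andP[h1 h2]; have -> : v = p by apply/eqP; rewrite eq_le h1 h2.
have hs : has_sup S.
  split; first by exists p.
  by exists t => u [/andP[_ h] _].
set sg := sup S.
have ub : ubound S sg := sup_upper_bound hs.
have psg : p <= sg by apply: ub.
have sgt : sg <= t by apply: ge_sup; [exists p | move=> u [/andP[_ h] _]].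
have Isg : I sg by apply: (hI p t); rewrite ?psg ?sgt.
have below : forall v, p <= v < sg -> P v.
  move=> v /andP[pv vs].
  have e0 : 0 < sg - v by lra.
  have [u Su hu] := sup_adherent e0 hs.
  rewrite -/sg in hu; case: Su => _ h; apply: h; rewrite pv /=; lra.
have Psg : P sg.
  apply: hc => // d d0.
  have [u Su hu] := sup_adherent d0 hs.
  have usg : u <= sg by apply: ub.
  rewrite -/sg in hu; case: Su => /andP[pu ut] h.
  exists u; split.
  - by apply: (hI p t); rewrite ?pu ?ut.
  - rewrite ler0_norm ?subr_le0 //; lra.
  - by apply: h; rewrite pu lexx.
have sglt : sg < t.
  rewrite lt_neqAle sgt andbT; apply/eqP => e; apply: nPt; by rewrite -e.
have [d d0 hd] := ho _ Isg Psg.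
set u := Num.min (sg + d / 2) t.
have Su : S u.
  split.
    rewrite /u le_min ge_min lexx orbT andbT; apply/andP; split; lra.
  move=> v /andP[pv vu].
  have [vs|sv] := ltP v sg; first by apply: below; rewrite pv vs.
  have vt : v <= t by apply: le_trans vu _; rewrite /u ge_min lexx orbT.
  have vd : v <= sg + d / 2 by apply: le_trans vu _; rewrite /u ge_min lexx.
  apply: hd; first by apply: (hI p t); rewrite ?pv ?vt.
  rewrite ger0_norm ?subr_ge0 //; lra.
have h1 := ub _ Su.
have : sg < u by rewrite /u lt_min; apply/andP; split; lra.
lra.
Qed.

Lemma conn (I P : R -> Prop) p : Defs.is_interval I -> I p -> P p ->
  openP I P -> closedP I P -> forall t, I t -> P t.
Proof.
move=> hI Ip Pp ho hc t It.
have [pt|tp] := leP p t; first exact: (conn_fwd hI Ip Pp ho hc It pt).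
pose I' x := I (- x). pose P' x := P (- x).
have hI' : Defs.is_interval I'.
  move=> a b x Ia Ib /andP[h1 h2]; apply: (hI (- b) (- a)) => //; apply/andP; split; lra.
have ho' : openP I' P'.
  move=> x Ix Px; have [d d0 hd] := ho _ Ix Px; exists d => // x' Ix' hx.
  apply: hd => //; rewrite -normrN; rewrite (_ : - (- x' - - x) = x' - x) //; ring.
have hc' : closedP I' P'.
  move=> x Ix h; apply: hc => // d d0; have [x' [I1 h1 h2]] := h d d0.
  exists (- x'); split => //; rewrite -normrN; rewrite (_ : - (- x' - - x) = x' - x) //; ring.
have := @conn_fwd I' P' (- p) hI'; rewrite /I' /P' !opprK => /(_ Ip Pp ho' hc' (- t)).
rewrite opprK => /(_ It); apply; lra.
Qed.

End CONN.

Section UD.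
Variable R : realType.
Notation Mat := (Mat R).
Notation PSL2 := (PSL2 R).
Notation pone := (pone R).

Lemma choice_nat (A : Type) (P : nat -> A -> Prop) :
  (forall n, exists a, P n a) -> exists f : nat -> A, forall n, P n (f n).
Proof.
move=> h; exists (fun n => proj1_sig (constructive_indefinite_description _ (h n))).
by move=> n; case: (constructive_indefinite_description _ _).
Qed.

Lemma inv_small (e : R) : 0 < e -> exists N, forall n, (N <= n)%N -> (n.+1%:R)^-1 < e.
Proof.
move=> e0; have [k hk] := mx_archi e0; exists k => n hn.
have hn' : (k%:R : R) <= n%:R by rewrite ler_nat.
have np : (0 : R) < n.+1%:R by rewrite ltr0n.
rewrite -[X in X < _]div1r ltr_pdivrMr // -natr1.
have : k%:R * e <= n%:R * e by apply: ler_wpM2r => //; lra.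
nra.
Qed.

Lemma rconv_inv (u : nat -> R) t : (forall n, `|u n - t| < (n.+1%:R)^-1) -> rconv u t.
Proof.
move=> h e e0; have [N hN] := inv_small e0; exists N => n hn.
by apply: lt_trans (h n) (hN n hn).
Qed.

Lemma inv_pos n : (0 : R) < (n.+1%:R)^-1.
Proof. by rewrite invr_gt0 ltr0n. Qed.

Variable Gam : R -> PSL2 -> Prop.
Hypothesis hG : cont_path_D Gam.

Lemma G_sub t : unit_int t -> psubgroup (Gam t).
Proof. by move=> ht; case: hG => h _; case: (h t ht). Qed.
Lemma G_disc t : unit_int t -> pdiscrete (Gam t).
Proof. by move=> ht; case: hG => h _; case: (h t ht) => _ []. Qed.
Lemma G_one t : unit_int t -> Gam t pone.
Proof. by move=> ht; case: (G_sub ht). Qed.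
Lemma G_mul t g h : unit_int t -> Gam t g -> Gam t h -> Gam t (pmul g h).
Proof. by move=> ht; case: (G_sub ht) => _ []; auto. Qed.
Lemma G_inv t g : unit_int t -> Gam t g -> Gam t (pinv g).
Proof. by move=> ht; case: (G_sub ht) => _ []; auto. Qed.
Lemma G_pow t g n : unit_int t -> Gam t g -> Gam t (ppow g n).
Proof.
move=> ht hg; elim: n => [|n IH]; first exact: G_one.
exact: G_mul.
Qed.
Lemma G_chab (u : nat -> R) t : (forall n, unit_int (u n)) -> unit_int t -> rconv u t ->
  chabauty_conv (fun n => Gam (u n)) (Gam t).
Proof. by case: hG => _ h; apply: h. Qed.

Lemma escape_g (g : PSL2) : g <> pone -> exists k, 1/4 <= pdist (ppow g k) pone.
Proof.
move=> hg.
have hd := pmat_det g.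
have h1 : pmat g != 1.
  by apply/eqP => e; apply: hg; apply: pmat_inj; rewrite e pmat_pone.
have h2 : pmat g != - 1.
  by apply/eqP => e; apply: (@pmat_opp R g pone); rewrite e pmat_pone.
have [k hk] := escape hd h1 h2.
by exists k; rewrite pdist_ppow1.
Qed.

Lemma escape_fine (g : PSL2) (rho : R) : g <> pone -> 0 < rho <= 1/4 ->
  exists k, rho <= pdist (ppow g k) pone <= rho + (2 + rho) * pdist g pone.
Proof.
move=> hg /andP[r0 r4].
have ex : exists k, rho <= pdist (ppow g k) pone.
  by have [k hk] := escape_g hg; exists k; apply: le_trans r4 hk.
pose Pb k := rho <= pdist (ppow g k) pone.
have exb : exists k, Pb k by [].
pose m := ex_minn exb.
have Pm : Pb m by rewrite /m; case: ex_minnP.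
have mmin : forall k, Pb k -> (m <= k)%N by rewrite /m; case: ex_minnP.
case Em : m Pm => [|m'] Pm.
  by move: Pm; rewrite /Pb /= pdistxx; lra.
have nP : ~~ Pb m'.
  by apply/negP => /mmin; rewrite Em ltnn.
rewrite /Pb -ltNge in nP.
exists m'.+1; apply/andP; split; first exact: Pm.
rewrite !pdist_ppow1 in nP * ; rewrite pdist1.
set A := pmat g.
have step : dm (A ^+ m'.+1) 1 <= dm (A ^+ m') 1 + mnorm (A ^+ m') * dm A 1.
  rewrite exprSr; apply: le_trans (dm_tri _ (A ^+ m') _) _.
  by rewrite addrC lerD2l; have := dm_mull (A ^+ m') A 1; rewrite mulr1.
have hn : mnorm (A ^+ m') <= 2 + dm (A ^+ m') 1.
  by have := mnorm_le_dm (A ^+ m') 1; rewrite mnorm1.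
have d0 := dm_ge0 A 1; have d1 := dm_ge0 (A ^+ m') 1.
have : mnorm (A ^+ m') * dm A 1 <= (2 + rho) * dm A 1.
  by apply: ler_wpM2r => //; lra.
lra.
Qed.

Lemma UDid t0 : unit_int t0 -> exists2 eps : R, 0 < eps & exists2 del : R, 0 < del &
  forall t, unit_int t -> `|t - t0| < del -> forall g, Gam t g -> pdist g pone < eps -> g = pone.
Proof.
move=> ht0.
have [e0 e0p he0] := G_disc ht0 (G_one ht0).
set rho := Num.min (e0 / 2) (1/4).
have rp : 0 < rho by rewrite lt_min; apply/andP; split; lra.
have r4 : rho <= 1/4 by rewrite /rho ge_min lexx orbT.
have r2 : rho <= e0 / 2 by rewrite /rho ge_min lexx.
apply: NNPP => hn.
have hseq : forall n : nat, exists tg : R * PSL2,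
    [/\ unit_int tg.1, `|tg.1 - t0| < (n.+1%:R)^-1, Gam tg.1 tg.2,
        pdist tg.2 pone < (n.+1%:R)^-1 & tg.2 <> pone].
  move=> n; apply: NNPP => hnn; apply: hn.
  exists (n.+1%:R)^-1; first exact: inv_pos.
  exists (n.+1%:R)^-1; first exact: inv_pos.
  move=> t ht htd g hg hgd; apply: NNPP => hne; apply: hnn.
  by exists (t, g).
have [tg htg] := choice_nat hseq.
have hk : forall n, exists k, rho <= pdist (ppow (tg n).2 k) pone <=
    rho + (2 + rho) * (n.+1%:R)^-1.
  move=> n; case: (htg n) => _ _ _ hd hne.
  have rr : 0 < rho <= 1/4 by rewrite rp r4.
  have [k /andP[k1 k2]] := escape_fine hne rr.
  exists k; rewrite k1 /=; apply: le_trans k2 _.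
  by rewrite lerD2l; apply: ler_wpM2l; [lra | apply: ltW].
have [ks hks] := choice_nat hk.
pose h n := ppow (tg n).2 (ks n).
have hin : forall n, Gam (tg n).1 (h n).
  by move=> n; case: (htg n) => u _ hg _ _; apply: G_pow.
have hbd : forall n, mnorm (pmat (h n)) <= 6.
  move=> n; have := mnorm_pmat_le (h n) pone; rewrite /h pmat_pone mnorm1.
  case/andP: (hks n) => _ h2.
  have i1 : (n.+1%:R : R)^-1 <= 1 by rewrite invf_le1 // ?ler1n // ltr0n.
  have : (2 + rho) * (n.+1%:R : R)^-1 <= (2 + rho) * 1 by apply: ler_wpM2l => //; lra.
  move=> hA hB; have := r4; have := r2; move: hA hB h2; set x := (2 + rho) / _; set y := pdist _ _; set z := mnorm _; lra.
have [c hc] := psl_cluster hbd.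
have hconv : rconv (fun n => (tg n).1) t0 by apply: rconv_inv => n; case: (htg n).
have [chab1 _] := G_chab (fun n => (let: And5 u _ _ _ _ := htg n in u)) ht0 hconv.
have Gc : Gam t0 c := chab1 h c hin hc.
have lo : rho / 2 <= pdist c pone.
  have r20 : 0 < rho / 2 by lra.
  have [n _ hn1] := hc _ r20 0%N.
  case/andP: (hks n) => h1 _.
  have := pdist_tri (h n) c pone; rewrite -/(h n); lra.
have hi : pdist c pone < e0.
  have e8 : 0 < e0 / 8 by lra.
  have e16 : 0 < e0 / 24 by lra.
  have [N hN] := inv_small e16.
  have [n hn1 hn2] := hc _ e8 N.
  case/andP: (hks n) => _ h2.
  have := hN n hn1; have := pdist_tri c (h n) pone; rewrite [pdist c (h n)]pdistC.
  have : (2 + rho) * (n.+1%:R : R)^-1 <= 3 * (n.+1%:R)^-1.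
    by apply: ler_wpM2r; [apply: ltW; apply: inv_pos | lra].
  rewrite /h in h2 hn2 *; move: h2; set y := (2 + rho) / _ => h2 H1 H2 H3. move: H1 H3. set x := (n.+1%:R)^-1. move=> H1 H3. lra.
have ce := he0 c Gc hi.
by move: lo; rewrite ce pdistxx; lra.
Qed.

Lemma UDg t0 : unit_int t0 -> exists2 eps : R, 0 < eps & exists2 del : R, 0 < del &
  forall t, unit_int t -> `|t - t0| < del -> forall g h, Gam t g -> Gam t h ->
    mnorm (pmat g) * pdist g h < eps -> g = h.
Proof.
move=> ht0; have [eps ep [del dp hd]] := UDid ht0.
exists eps => //; exists del => // t ht htd g h hg hh hgh.
apply: pinvmul_one; apply: (hd t ht htd).
  by apply: G_mul => //; apply: G_inv.
exact: le_lt_trans (pdist_pinvmul g h) hgh.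
Qed.

End UD.

Section PATHS.
Variable R : realType.
Notation Mat := (Mat R).
Notation PSL2 := (PSL2 R).
Notation pone := (pone R).
Variable Gam : R -> PSL2 -> Prop.
Hypothesis hG : cont_path_D Gam.

Lemma small_prod (a b e eps M : R) : 0 <= a -> a < M -> 0 <= b -> b < 2 * e ->
  e * (4 * M) <= eps -> 0 < eps -> a * b < eps.
Proof.
move=> a0 aM b0 be he ep.
have : a * b <= M * (2 * e) by apply: ler_pM => //; lra.
nra.
Qed.

Lemma mmin_pos (a b : R) : 0 < a -> 0 < b -> 0 < Num.min a b.
Proof. by move=> ha hb; rewrite lt_min ha hb. Qed.
Lemma mmin_l (a b : R) : Num.min a b <= a.
Proof. by rewrite ge_min lexx. Qed.
Lemma mmin_r (a b : R) : Num.min a b <= b.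
Proof. by rewrite ge_min lexx orbT. Qed.

Lemma uniq_paths s1 p1 I1 j1 s2 p2 I2 j2 p :
  Gam_path Gam s1 p1 I1 j1 -> Gam_path Gam s2 p2 I2 j2 ->
  I1 p -> I2 p -> j1 p = j2 p -> forall t, I1 t -> I2 t -> j1 t = j2 t.
Proof.
rewrite /Gam_path; move=> [hI1 [hU1 [_ [hc1 [hm1 _]]]]] [hI2 [hU2 [_ [hc2 [hm2 _]]]]] Ip1 Ip2 ejp t It1 It2.
have hI : Defs.is_interval (fun t => I1 t /\ I2 t).
  rewrite /Defs.is_interval => a b x [a1 a2] [b1 b2] hx; split; [apply: (hI1 a b) | apply: (hI2 a b)] => //.
suff : forall t, I1 t /\ I2 t -> j1 t = j2 t by move=> h; apply: h.
apply: (@conn R _ (fun t => j1 t = j2 t) p hI) => //.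
- move=> u [Iu1 Iu2] hu.
  have uu := hU1 u Iu1.
  have [eps ep [del dp hd]] := UDg hG uu.
  set M := mnorm (pmat (j1 u)) + 1.
  have Mp : 0 < M by have := mnorm_ge0 (pmat (j1 u)); rewrite /M; lra.
  set e := Num.min 1 (eps / (4 * M)).
  have e0 : 0 < e by apply: mmin_pos => //; apply: divr_gt0 => //; lra.
  have e1 : e <= 1 := mmin_l _ _.
  have e2 : e * (4 * M) <= eps.
    have := mmin_r 1 (eps / (4 * M)); rewrite -/e => h.
    by rewrite -ler_pdivlMr //; lra.
  have [d1 d1p hd1] := hc1 u Iu1 e e0.
  have [d2 d2p hd2] := hc2 u Iu2 e e0.
  exists (Num.min del (Num.min d1 d2)); first by do 2 apply: mmin_pos => //.
  move=> u' [Iu1' Iu2'] hu' /=.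
  have h1 : `|u' - u| < del by apply: lt_le_trans hu' (mmin_l _ _).
  have h2 : `|u' - u| < d1.
    by apply: lt_le_trans hu' _; apply: le_trans (mmin_r _ _) (mmin_l _ _).
  have h3 : `|u' - u| < d2.
    by apply: lt_le_trans hu' _; apply: le_trans (mmin_r _ _) (mmin_r _ _).
  have q1 := hd1 u' Iu1' h2; have q2 := hd2 u' Iu2' h3.
  apply: (hd u' (hU1 u' Iu1') h1) => //; [exact: hm1 | exact: hm2 |].
  apply: (small_prod (mnorm_ge0 _) _ (pdist_ge0 _ _) _ e2 ep).
  + have := mnorm_pmat_le (j1 u') (j1 u); rewrite /M; lra.
  + have := pdist_tri (j1 u') (j2 u) (j2 u'); rewrite [pdist (j2 u) (j2 u')]pdistC.
    rewrite hu in q1; lra.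
- move=> u [Iu1 Iu2] hcl.
  apply: pdist_eq0; apply/eqP; rewrite eq_le pdist_ge0 andbT.
  apply: le0_small => z z0.
  have z2 : 0 < z / 2 by lra.
  have [d1 d1p hd1] := hc1 u Iu1 _ z2.
  have [d2 d2p hd2] := hc2 u Iu2 _ z2.
  have [u' [[Iu1' Iu2'] hu' eu']] := hcl _ (mmin_pos d1p d2p).
  have q1 := hd1 u' Iu1' (lt_le_trans hu' (mmin_l _ _)).
  have q2 := hd2 u' Iu2' (lt_le_trans hu' (mmin_r _ _)).
  have := pdist_tri (j1 u) (j2 u') (j2 u); rewrite [pdist (j1 u) (j2 u')]pdistC.
  rewrite eu' in q1; lra.
Qed.

End PATHS.

Section PATHS2.
Variable R : realType.
Notation Mat := (Mat R).
Notation PSL2 := (PSL2 R).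
Notation pone := (pone R).
Variable Gam : R -> PSL2 -> Prop.
Hypothesis hG : cont_path_D Gam.

Definition Wd (s d : R) (t : R) : Prop := unit_int t /\ `|t - s| < d.

Lemma Wd_int s d : Defs.is_interval (Wd s d).
Proof.
rewrite /Defs.is_interval /Wd /unit_int => a b x [/andP[a0 a1] ha] [/andP[b0 b1] hb] /andP[ax xb].
split; first by apply/andP; split; lra.
move: ha hb; rewrite !ltr_norml => /andP[ha1 ha2] /andP[hb1 hb2].
by apply/andP; split; lra.
Qed.

Lemma Wd_s s d : unit_int s -> 0 < d -> Wd s d s.
Proof. by move=> hs d0; split => //; rewrite subrr normr0. Qed.

Lemma path_restrict s psi I j I' : Gam_path Gam s psi I j -> Defs.is_interval I' -> I' s ->
  (forall t, I' t -> I t) -> Gam_path Gam s psi I' j.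
Proof.
rewrite /Gam_path => -[hI [hU [hs [hc [hm he]]]]] hI' hs' sub.
split => //; split; first by move=> t /sub; apply: hU.
split => //; split; last by split => // t /sub; apply: hm.
move=> t It e e0; have [d d0 hd] := hc t (sub t It) e e0.
by exists d => // t' It' ht'; apply: hd => //; apply: sub.
Qed.

Lemma path_one s d : unit_int s -> 0 < d -> Gam_path Gam s pone (Wd s d) (fun _ => pone).
Proof.
move=> hs d0; split; first exact: Wd_int.
split; first by move=> t [].
split; first exact: Wd_s.
split.
  by move=> t _ e e0; exists 1 => // t' _ _; rewrite pdistxx.
split => // t [ht _]; exact: G_one.
Qed.

Lemma prod_small (a b M c e : R) : 0 <= a -> a <= M -> 0 <= b -> b < c -> c * M <= e -> 0 <= M ->
  a * b <= e.
Proof.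
move=> a0 aM b0 bc hc M0.
have : a * b <= M * c by apply: ler_pM => //; lra.
rewrite mulrC in hc; lra.
Qed.

Lemma path_mul s h1 h2 I j1 j2 : Gam_path Gam s h1 I j1 -> Gam_path Gam s h2 I j2 ->
  Gam_path Gam s (pmul h1 h2) I (fun t => pmul (j1 t) (j2 t)).
Proof.
rewrite /Gam_path => -[hI [hU [hs [hc1 [hm1 he1]]]]] [_ [_ [_ [hc2 [hm2 he2]]]]].
split => //; split => //; split => //; split; last first.
  by split; [move=> t It; apply: G_mul => //; auto | rewrite he1 he2].
move=> t It e e0.
set M1 := mnorm (pmat (j1 t)) + 1.
set M2 := mnorm (pmat (j2 t)) + 1.
have M1p : 0 < M1 by have := mnorm_ge0 (pmat (j1 t)); rewrite /M1; lra.
have M2p : 0 < M2 by have := mnorm_ge0 (pmat (j2 t)); rewrite /M2; lra.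
set e1 := Num.min 1 (e / (3 * M2)).
have e1p : 0 < e1 by apply: mmin_pos => //; apply: divr_gt0 => //; lra.
set e2 := e / (3 * M1).
have e2p : 0 < e2 by apply: divr_gt0 => //; lra.
have [d1 d1p hd1] := hc1 t It e1 e1p.
have [d2 d2p hd2] := hc2 t It e2 e2p.
exists (Num.min d1 d2); first exact: mmin_pos.
move=> t' It' ht'.
have q1 := hd1 t' It' (lt_le_trans ht' (mmin_l _ _)).
have q2 := hd2 t' It' (lt_le_trans ht' (mmin_r _ _)).
apply: le_lt_trans (pdist_pmul _ _ _ _) _.
have c1 : e2 * M1 <= e / 3.
  have M1n : M1 != 0 by rewrite gt_eqF.
  by rewrite /e2 le_eqVlt; apply/orP; left; apply/eqP; field.
have c2 : e1 * M2 <= e / 3.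
  have := mmin_r 1 (e / (3 * M2)); rewrite -/e1 => h.
  have : e1 * M2 <= e / (3 * M2) * M2 by apply: ler_wpM2r; lra.
  have M2n : M2 != 0 by rewrite gt_eqF.
  have -> : e / (3 * M2) * M2 = e / 3 by field.
  done.
have t1 : mnorm (pmat (j1 t')) * pdist (j2 t') (j2 t) <= e / 3.
  apply: (@prod_small _ _ M1 e2) => //; [exact: mnorm_ge0 | | exact: pdist_ge0 | lra].
  have := mnorm_pmat_le (j1 t') (j1 t); have := mmin_l 1 (e / (3 * M2)); rewrite -/e1 /M1; lra.
have t2 : pdist (j1 t') (j1 t) * mnorm (pmat (j2 t)) <= e / 3.
  rewrite mulrC; apply: (@prod_small _ _ M2 e1) => //; [exact: mnorm_ge0 | | exact: pdist_ge0 | lra].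
  rewrite /M2; lra.
lra.
Qed.

Lemma path_inv s h I j : Gam_path Gam s h I j -> Gam_path Gam s (pinv h) I (fun t => pinv (j t)).
Proof.
rewrite /Gam_path => -[hI [hU [hs [hc [hm he]]]]].
split => //; split => //; split => //; split; last first.
  by split; [move=> t It; apply: G_inv => //; auto | rewrite he].
move=> t It e e0; have [d d0 hd] := hc t It e e0.
by exists d => // t' It' ht'; rewrite pdist_pinv; apply: hd.
Qed.

Lemma path_exist s g : unit_int s -> Gam s g ->
  exists2 d : R, 0 < d & exists j, Gam_path Gam s g (Wd s d) j.
Proof.
move=> hs hg.
have [eps ep [del dp hd]] := UDg hG hs.
set M := mnorm (pmat g) + 1.
have Mp : 0 < M by have := mnorm_ge0 (pmat g); rewrite /M; lra.
set eta := Num.min 1 (eps / (4 * M)).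
have etap : 0 < eta by apply: mmin_pos => //; apply: divr_gt0 => //; lra.
have eta1 : eta <= 1 := mmin_l _ _.
have eta2 : eta * (4 * M) <= eps.
  have := mmin_r 1 (eps / (4 * M)); rewrite -/eta => h.
  by rewrite -ler_pdivlMr //; lra.
have ub : forall t, unit_int t -> `|t - s| < del -> forall x y, Gam t x -> Gam t y ->
    pdist x g <= eta -> pdist y g <= eta -> x = y.
  move=> t ht htd x y hx hy hxg hyg; apply: (hd t ht htd x y hx hy).
  have a0 := mnorm_ge0 (pmat x); have b0 := pdist_ge0 x y.
  have aM : mnorm (pmat x) <= M by have := mnorm_pmat_le x g; rewrite /M; lra.
  have bM : pdist x y <= 2 * eta.
    by have := pdist_tri x g y; rewrite [pdist g y]pdistC; lra.
  have : mnorm (pmat x) * pdist x y <= M * (2 * eta) by apply: ler_pM.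
  nra.
have [d1 d1p hd1] : exists2 d1 : R, 0 < d1 & forall t, unit_int t -> `|t - s| < d1 ->
    exists x, Gam t x /\ pdist x g < eta.
  apply: NNPP => hn.
  have hseq : forall n : nat, exists t, [/\ unit_int t, `|t - s| < (n.+1%:R)^-1 &
      forall x, Gam t x -> eta <= pdist x g].
    move=> n; apply: NNPP => hn2; apply: hn; exists (n.+1%:R)^-1; first exact: inv_pos.
    move=> t ht htd; apply: NNPP => hn3; apply: hn2; exists t; split => // x hx.
    by rewrite leNgt; apply/negP => hlt; apply: hn3; exists x.
  have [ts hts] := choice_nat hseq.
  have hconv : rconv ts s by apply: rconv_inv => n; case: (hts n).
  have [_ chab2] := G_chab hG (fun n => let: And3 u _ _ := hts n in u) hs hconv.
  have [psi [hpsi hpc]] := chab2 g hg.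
  have [N hN] := hpc eta etap.
  case: (hts N) => _ _ /(_ _ (hpsi N)).
  by have := hN N (leqnn N); lra.
set d := Num.min del d1.
have dpos : 0 < d by apply: mmin_pos.
have Wdel : forall t, Wd s d t -> `|t - s| < del.
  by move=> t [_ h]; apply: lt_le_trans h (mmin_l _ _).
have Wd1 : forall t, Wd s d t -> `|t - s| < d1.
  by move=> t [_ h]; apply: lt_le_trans h (mmin_r _ _).
pose j t := epsilon (inhabits g) (fun x => Gam t x /\ pdist x g < eta).
have jspec : forall t, Wd s d t -> Gam t (j t) /\ pdist (j t) g < eta.
  move=> t Wt; apply: (epsilon_spec (inhabits g) (fun x => Gam t x /\ pdist x g < eta)).
  by apply: hd1; [case: Wt | apply: Wd1].
have Ws : Wd s d s by apply: Wd_s.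
have js : j s = g.
  case: (jspec s Ws) => h1 h2.
  apply: (ub s hs (Wdel s Ws)) => //; first exact: ltW.
  by rewrite pdistxx; apply: ltW.
exists d => //; exists j.
split; first exact: Wd_int.
split; first by move=> t [].
split => //.
split; last by split => // t Wt; case: (jspec t Wt).
move=> t1 W1 e e0; apply: NNPP => hn.
have hseq : forall n : nat, exists t', [/\ Wd s d t', `|t' - t1| < (n.+1%:R)^-1 &
    e <= pdist (j t') (j t1)].
  move=> n; apply: NNPP => hn2; apply: hn; exists (n.+1%:R)^-1; first exact: inv_pos.
  move=> t' Wt' ht'; rewrite ltNge; apply/negP => hle; apply: hn2; exists t'; split => //.
have [ts hts] := choice_nat hseq.
have hbd : forall n, mnorm (pmat (j (ts n))) <= M.
  move=> n; case: (hts n) => Wn _ _; case: (jspec _ Wn) => _ h2.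
  by have := mnorm_pmat_le (j (ts n)) g; rewrite /M; lra.
have [c hc] := psl_cluster hbd.
have hconv : rconv ts t1 by apply: rconv_inv => n; case: (hts n).
have unt : forall n, unit_int (ts n) by move=> n; case: (hts n) => [[]].
have [chab1 _] := G_chab hG unt (proj1 W1) hconv.
have Gc : Gam t1 c.
  apply: (chab1 (fun n => j (ts n))) => // n; case: (hts n) => Wn _ _; by case: (jspec _ Wn).
have cg : pdist c g <= eta.
  rewrite -subr_le0; apply: le0_small => z z0.
  have [m _ hm1] := hc z z0 0%N.
  case: (hts m) => Wm _ _; case: (jspec _ Wm) => _ h2.
  have := pdist_tri c (j (ts m)) g; rewrite [pdist c (j (ts m))]pdistC; lra.
have cj : c = j t1.
  case: (jspec t1 W1) => h1 h2.
  by apply: (ub t1 (proj1 W1) (Wdel t1 W1)) => //; apply: ltW.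
have [m _ hm1] := hc e e0 0%N.
case: (hts m) => _ _; rewrite -cj; lra.
Qed.

End PATHS2.

Section FINAL.
Variable R : realType.
Notation PSL2 := (PSL2 R).
Notation pone := (pone R).
Variable Gam : R -> PSL2 -> Prop.
Hypothesis hG : cont_path_D Gam.

Lemma J_spec s t psi : match J Gam s t psi with
  | Some phi => J_rel Gam s t psi phi
  | None => ~ exists phi, J_rel Gam s t psi phi end.
Proof.
rewrite /J; apply: (epsilon_spec (inhabits None) (fun o : option PSL2 => match o with
  | Some phi => J_rel Gam s t psi phi
  | None => ~ exists phi, J_rel Gam s t psi phi end)).
case: (classic (exists phi, J_rel Gam s t psi phi)) => [[phi h]|h].
  by exists (Some phi).
by exists None.
Qed.

Lemma J_some s t psi phi : J Gam s t psi = Some phi -> J_rel Gam s t psi phi.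
Proof. by move=> e; have := J_spec s t psi; rewrite e. Qed.

Lemma J_notnone s t psi phi : J_rel Gam s t psi phi -> J Gam s t psi <> None.
Proof. by move=> h e; have := J_spec s t psi; rewrite e; apply; exists phi. Qed.

Lemma J_rel_uniq s t psi phi1 phi2 :
  J_rel Gam s t psi phi1 -> J_rel Gam s t psi phi2 -> phi1 = phi2.
Proof.
move=> [I1 [j1 [p1 [It1 e1]]]] [I2 [j2 [p2 [It2 e2]]]].
have [_ [_ [Is1 [_ [_ js1]]]]] := p1; have [_ [_ [Is2 [_ [_ js2]]]]] := p2.
rewrite -e1 -e2; apply: (uniq_paths hG p1 p2 Is1 Is2) => //.
by rewrite js1 js2.
Qed.

Lemma int_cap (I1 I2 : R -> Prop) : Defs.is_interval I1 -> Defs.is_interval I2 ->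
  Defs.is_interval (fun t => I1 t /\ I2 t).
Proof.
move=> h1 h2; rewrite /Defs.is_interval => a b x [a1 a2] [b1 b2] hx.
by split; [apply: (h1 a b) | apply: (h2 a b)].
Qed.

Lemma list_paths s (l : list PSL2) : unit_int s -> (forall x, In x l -> Gam s x) ->
  exists2 d : R, 0 < d & forall x, In x l -> exists j, Gam_path Gam s x (Wd s d) j.
Proof.
move=> hs; elim: l => [|x l IH] hl.
  by exists 1 => //.
have [d1 d1p [j1 hj1]] := path_exist hG hs (hl x (or_introl erefl)).
have [d2 d2p hd2] := IH (fun y hy => hl y (or_intror hy)).
exists (Num.min d1 d2); first exact: mmin_pos.
have sub1 : forall t, Wd s (Num.min d1 d2) t -> Wd s d1 t.
  by move=> t [h1 h2]; split => //; apply: lt_le_trans h2 (mmin_l _ _).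
have sub2 : forall t, Wd s (Num.min d1 d2) t -> Wd s d2 t.
  by move=> t [h1 h2]; split => //; apply: lt_le_trans h2 (mmin_r _ _).
have Ws : Wd s (Num.min d1 d2) s by apply: Wd_s => //; apply: mmin_pos.
move=> y [<-|hy].
  by exists j1; apply: (path_restrict hj1 (@Wd_int _ s _) Ws sub1).
have [j hj] := hd2 y hy.
by exists j; apply: (path_restrict hj (@Wd_int _ s _) Ws sub2).
Qed.

End FINAL.

Unset Implicit Arguments.
Import Defs.

Theorem mainTheorem12 (R : realType) (Gam : R -> PSL2 R -> Prop) :
  cont_path_D Gam ->
  forall (s : R) (H : PSL2 R -> Prop),
    unit_int s -> fin_gen_subgroup H -> (forall h, H h -> Gam s h) ->
    exists2 d : R, 0 < d &
      forall t : R, unit_int t -> `|t - s| < d ->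
        (* J_{s,t} takes finite values on H *)
        (forall h, H h -> J Gam s t h <> None) /\
        (* J_{s,t}|_H is a homomorphism *)
        (forall h1 h2 x1 x2, H h1 -> H h2 ->
           J Gam s t h1 = Some x1 -> J Gam s t h2 = Some x2 ->
           J Gam s t (pmul h1 h2) = Some (pmul x1 x2)) /\
        (* J_{s,t}|_H is injective *)
        (forall h1 h2, H h1 -> H h2 -> J Gam s t h1 = J Gam s t h2 -> h1 = h2).
Proof.
move=> hG s H hs [Hsub [l hl]] HG.
have lH : forall x, In x l -> H x.
  by move=> x hx; apply/(hl x) => K _ hK; apply: hK.
have [d dp hd] := list_paths hG hs (fun x hx => HG x (lH x hx)).
pose K h := exists j, Gam_path Gam s h (Wd s d) j.
have Ksub : psubgroup K.
  split; first by exists (fun _ => pone R); apply: path_one.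
  split.
    by move=> g h [j1 h1] [j2 h2]; exists (fun t => pmul (j1 t) (j2 t)); apply: path_mul.
  by move=> g [j1 h1]; exists (fun t => pinv (j1 t)); apply: path_inv.
have HK : forall h, H h -> K h.
  by move=> h /(hl h) hgen; apply: hgen => // x hx; apply: hd.
exists d => // t ht htd.
have Wt : Wd s d t by split.
have fin : forall h, H h -> J Gam s t h <> None.
  move=> h /HK [j hj]; apply: (J_notnone (phi := j t)).
  by exists (Wd s d), j; split.
split => //; split.
- move=> h1 h2 x1 x2 H1 H2 e1 e2.
  have [I1 [j1 [p1 [It1 f1]]]] := J_some e1.
  have [I2 [j2 [p2 [It2 f2]]]] := J_some e2.
  have [hI1 [_ [Is1 _]]] := p1; have [hI2 [_ [Is2 _]]] := p2.
  have hI := int_cap hI1 hI2.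
  have q1 := path_restrict p1 hI (conj Is1 Is2) (fun t h => proj1 h).
  have q2 := path_restrict p2 hI (conj Is1 Is2) (fun t h => proj2 h).
  have q := path_mul hG q1 q2.
  have r : J_rel Gam s t (pmul h1 h2) (pmul x1 x2).
    by exists (fun t => I1 t /\ I2 t), (fun t => pmul (j1 t) (j2 t)); rewrite f1 f2.
  have Hm : H (pmul h1 h2) by case: Hsub => _ [+ _]; apply.
  case E : (J Gam s t (pmul h1 h2)) => [y|]; last by have := fin _ Hm; rewrite E.
  by rewrite (J_rel_uniq hG (J_some E) r).
- move=> h1 h2 H1 H2 e.
  case E : (J Gam s t h1) => [x|]; last by have := fin _ H1; rewrite E.
  rewrite E in e.
  have [I1 [j1 [p1 [It1 f1]]]] := J_some E.
  have [I2 [j2 [p2 [It2 f2]]]] := J_some (esym e).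
  have [_ [_ [Is1 [_ [_ js1]]]]] := p1; have [_ [_ [Is2 [_ [_ js2]]]]] := p2.
  rewrite -js1 -js2; apply: (uniq_paths hG p1 p2 It1 It2) => //.
  by rewrite f1 f2.
Qed.
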